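(* Fix $2<p<\infty$ and constants $c,c',c''>0$. There is $C$ depending only on $p,c,c''$ such that: if a square $Q$ satisfies $\mathbf{R}(c,c',c'')$ relative to a finite set $E_0\subset\mathbb{R}^2$, then $\|Q\cap E_0\|_{\dot B}\ge C^{-1}\delta_Q^{2/p-1}$.
   Context: A square $Q$ is a closed axis-parallel square with side length $\delta_Q$. The Besov seminorm of a set $\Omega$ is $\|\Omega\|_{\dot B}=\inf\{\|\varphi\|_{\dot B(\mathbb{R})}\}$ over Euclidean coordinates $(z_1,z_2)$ and $\varphi$ with $\Omega\subset\{(z_1,\varphi(z_1))_{z_1z_2}\}$, where $\|\varphi\|_{\dot B(\mathbb{R})}=\big(\iint\frac{|\varphi'(x)-\varphi'(y)|^p}{|x-y|^p}dxdy\big)^{1/p}$. Roughness: $Q$ satisfies $\mathbf{R}(c,c',c'')$ relative to $E_0$ iff (R1) there exist $x_1,x_2,y_1,y_2\in E_0\cap Q$ with $x_1\ne x_2$, $y_1\ne y_2$ and $\min\{|v_1-v_2|,|v_1+v_2|\}>c''$ where $v_1=\frac{x_1-x_2}{|x_1-x_2|}$, $v_2=\frac{y_1-y_2}{|y_1-y_2|}$; or (R2) $c\,\delta_Q^{2/p-1}\le\|E_0\cap Q\|_{\dot B}\le c'\delta_Q^{2/p-1}$. *)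

(* Defs.v *)
From Stdlib Require Import Reals Lra Lia List ClassicalEpsilon.
Open Scope R_scope.

Inductive ER : Type := Fin (r : R) | PInf.

Definition ER_le (u v : ER) : Prop :=
  match u, v with
  | _, PInf => True
  | PInf, Fin _ => False
  | Fin a, Fin b => a <= b
  end.

Definition is_sup_ER (S : R -> Prop) (v : ER) : Prop :=
  match v with
  | Fin r => is_lub S r
  | PInf => forall M : R, exists K, S K /\ M < K
  end.

Definition ER_sup (S : R -> Prop) : ER :=
  epsilon (inhabits PInf) (is_sup_ER S).

Definition is_glb_ER (S : ER -> Prop) (v : ER) : Prop :=
  (forall w, S w -> ER_le v w) /\
  (forall u, (forall w, S w -> ER_le u w) -> ER_le u v).

Definition ER_inf (S : ER -> Prop) : ER :=
  epsilon (inhabits PInf) (is_glb_ER S).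

(* real power with the convention 0^a = 0 (for a > 0) *)
Definition rpow (x a : R) : R :=
  if Rlt_dec 0 x then Rpower x a else 0.

Fixpoint sumN (n : nat) (g : nat -> R) : R :=
  match n with
  | O => 0
  | S k => sumN k g + g k
  end.

(* Lebesgue integral over R^2 of a nonnegative lower semicontinuous
   function, computed as the supremum of lower step sums over uniform
   N x N grids of squares [-Rr,Rr]^2 (m i j is any lower bound of f on
   the closed cell (i,j)). *)
Definition lower_sums (f : R -> R -> R) (K : R) : Prop :=
  exists (Rr : R) (N : nat) (m : nat -> nat -> R),
    0 < Rr /\
    (forall (i j : nat) (x y : R), (i < N)%nat -> (j < N)%nat ->
       - Rr + INR i * (2 * Rr / INR N) <= x <= - Rr + INR (S i) * (2 * Rr / INR N) ->
       - Rr + INR j * (2 * Rr / INR N) <= y <= - Rr + INR (S j) * (2 * Rr / INR N) ->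
       m i j <= f x y) /\
    K = sumN N (fun i => sumN N (fun j =>
          (2 * Rr / INR N) * (2 * Rr / INR N) * m i j)).

Definition integral2 (f : R -> R -> R) : ER := ER_sup (lower_sums f).

(* integrand |phi'(x)-phi'(y)|^p / |x-y|^p (set to 0 on the diagonal) *)
Definition besov_integrand (p : R) (dphi : R -> R) (x y : R) : R :=
  if Req_dec_T x y then 0
  else rpow (Rabs (dphi x - dphi y)) p / rpow (Rabs (x - y)) p.

(* ||phi||_{\dot B(R)} = (iint ...)^{1/p}, for phi with derivative dphi *)
Definition besov_fn_norm (p : R) (dphi : R -> R) : ER :=
  match integral2 (besov_integrand p dphi) with
  | Fin r => Fin (rpow r (1 / p))
  | PInf => PInf
  end.

(* Euclidean coordinates (z1,z2) of the point P in the orthonormal frame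
   with origin a, first axis at angle th, orientation given by b. *)
Definition coords (a : R * R) (th : R) (b : bool) (P : R * R) : R * R :=
  let u := fst P - fst a in
  let w := snd P - snd a in
  (u * cos th + w * sin th,
   (if b then 1 else -1) * (- u * sin th + w * cos th)).

(* Besov seminorm of a set Omega in R^2: infimum over Euclidean coordinate
   systems and C^1 functions phi whose graph (in those coordinates)
   contains Omega. *)
Definition besov_set_values (p : R) (Om : R * R -> Prop) (v : ER) : Prop :=
  exists (a : R * R) (th : R) (b : bool) (phi dphi : R -> R),
    (forall x, derivable_pt_lim phi x (dphi x)) /\
    continuity dphi /\
    (forall P, Om P -> snd (coords a th b P) = phi (fst (coords a th b P))) /\
    v = besov_fn_norm p dphi.

Definition besov_set_norm (p : R) (Om : R * R -> Prop) : ER :=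
  ER_inf (besov_set_values p Om).

Definition in_square (q : R * R) (delta : R) (P : R * R) : Prop :=
  fst q <= fst P <= fst q + delta /\ snd q <= snd P <= snd q + delta.

Definition E0Q (E0 : list (R * R)) (q : R * R) (delta : R) (P : R * R) : Prop :=
  In P E0 /\ in_square q delta P.

Definition norm2 (u : R * R) : R := sqrt (fst u ^ 2 + snd u ^ 2).
Definition vsub (u w : R * R) : R * R := (fst u - fst w, snd u - snd w).
Definition vadd (u w : R * R) : R * R := (fst u + fst w, snd u + snd w).
Definition unit_dir (x1 x2 : R * R) : R * R :=
  let d := vsub x1 x2 in (fst d / norm2 d, snd d / norm2 d).

Definition rough (p c c' c'' : R) (E0 : list (R * R)) (q : R * R) (delta : R) : Prop :=
  (exists x1 x2 y1 y2,
     E0Q E0 q delta x1 /\ E0Q E0 q delta x2 /\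
     E0Q E0 q delta y1 /\ E0Q E0 q delta y2 /\
     x1 <> x2 /\ y1 <> y2 /\
     Rmin (norm2 (vsub (unit_dir x1 x2) (unit_dir y1 y2)))
          (norm2 (vadd (unit_dir x1 x2) (unit_dir y1 y2))) > c'')
  \/
  (ER_le (Fin (c * Rpower delta (2 / p - 1))) (besov_set_norm p (E0Q E0 q delta)) /\
   ER_le (besov_set_norm p (E0Q E0 q delta)) (Fin (c' * Rpower delta (2 / p - 1)))).

(* Main.v *)
Require Import Defs.
From Stdlib Require Import Reals List.
From Stdlib Require Import Lra Lia ZArith Classical ClassicalEpsilon.
Open Scope R_scope.

Lemma sumN_ext n f g : (forall i, (i < n)%nat -> f i = g i) -> sumN n f = sumN n g.
Proof. induction n; simpl; intros; auto. rewrite IHn by (intros; apply H; lia). rewrite H by lia; auto. Qed.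
Lemma sumN_le n f g : (forall i, (i < n)%nat -> f i <= g i) -> sumN n f <= sumN n g.
Proof. induction n; simpl; intros; [lra|]. assert (H1:=H n ltac:(lia)). assert (sumN n f <= sumN n g) by (apply IHn; intros; apply H; lia). lra. Qed.
Lemma sumN_plus n f g : sumN n (fun i => f i + g i) = sumN n f + sumN n g.
Proof. induction n; simpl; [lra|]. rewrite IHn; lra. Qed.
Lemma sumN_scal n c f : sumN n (fun i => c * f i) = c * sumN n f.
Proof. induction n; simpl; [lra|]. rewrite IHn; lra. Qed.
Lemma sumN_minus n f g : sumN n (fun i => f i - g i) = sumN n f - sumN n g.
Proof. induction n; simpl; [lra|]. rewrite IHn; lra. Qed.
Lemma sumN_abs n f : Rabs (sumN n f) <= sumN n (fun i => Rabs (f i)).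
Proof. induction n; simpl. rewrite Rabs_R0; lra. eapply Rle_trans. apply Rabs_triang. lra. Qed.
Lemma sumN_nonneg n f : (forall i, (i < n)%nat -> 0 <= f i) -> 0 <= sumN n f.
Proof. intros. replace 0 with (sumN n (fun _ => 0)). apply sumN_le; auto. clear; induction n; simpl; lra. Qed.
Lemma sumN_zero n : sumN n (fun _ => 0) = 0.
Proof. induction n; simpl; lra. Qed.

Lemma tele n (x : nat -> R) : Rabs (x O - x n) <= sumN n (fun k => Rabs (x (S k) - x k)).
Proof. induction n; simpl. unfold Rminus; rewrite Rplus_opp_r, Rabs_R0; lra.
 eapply Rle_trans. 2: apply Rplus_le_compat_r; exact IHn.
 replace (x O - x (S n)) with ((x O - x n) + - (x (S n) - x n)) by ring.
 eapply Rle_trans. apply Rabs_triang. rewrite Rabs_Ropp. lra. Qed.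

Lemma geom_sum n q : 0 <= q < 1 -> sumN n (fun k => q ^ k) <= / (1 - q).
Proof. intros Hq. assert (forall n, sumN n (fun k => q^k) * (1-q) = 1 - q^n).
 { induction n0; simpl. ring. rewrite Rmult_plus_distr_r, IHn0. ring. }
 assert (0 <= q^n) by (apply pow_le; lra).
 apply Rmult_le_reg_r with (1-q). lra. rewrite H. rewrite Rinv_l by lra. lra. Qed.

Lemma sup_exists (S : R -> Prop) : (exists x, S x) -> exists v, is_sup_ER S v.
Proof. intros Hne. destruct (classic (bound S)) as [Hb|Hb].
 - destruct (completeness S Hb Hne) as [m Hm]. exists (Fin m); exact Hm.
 - exists PInf. simpl. intros M. apply NNPP; intro HM. apply Hb. exists M. intros x Hx.
   destruct (Rle_dec x M); auto. exfalso; apply HM; exists x; split; auto; lra. Qed.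

Lemma integral2_spec f r : integral2 f = Fin r -> forall K, lower_sums f K -> K <= r.
Proof. intros H K HK. unfold integral2, ER_sup in H.
 assert (Hne : exists x, lower_sums f x).
 { exists 0. exists 1, O, (fun _ _ => 0). repeat split; try lra. intros; lia. }
 destruct (sup_exists _ Hne) as [v Hv].
 pose proof (epsilon_spec (inhabits PInf) (is_sup_ER (lower_sums f)) (ex_intro _ v Hv)) as Hs.
 rewrite H in Hs. simpl in Hs. destruct Hs as [Hub _]. apply Hub; auto. Qed.

Lemma inf_exists (S : ER -> Prop) : (forall r, S (Fin r) -> 0 <= r) -> exists v, is_glb_ER S v.
Proof. intros Hpos. destruct (classic (exists r, S (Fin r))) as [[r0 Hr0]|Hno].
 - set (E := fun x => S (Fin (- x))).
   assert (Hb : bound E). { exists 0. intros x Hx. apply Hpos in Hx. lra. }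
   assert (Hn : exists x, E x). { exists (- r0). unfold E; rewrite Ropp_involutive; auto. }
   destruct (completeness E Hb Hn) as [m [Hm1 Hm2]]. exists (Fin (- m)). split.
   + intros [w|] Hw; simpl; auto. assert (E (-w)) by (unfold E; rewrite Ropp_involutive; auto).
     apply Hm1 in H. lra.
   + intros [u|] Hu; simpl.
     * assert (m <= - u). { apply Hm2. intros x Hx. apply Hu in Hx. simpl in Hx. lra. } lra.
     * apply Hu in Hr0. simpl in Hr0. auto.
 - exists PInf. split.
   + intros [w|] Hw; simpl; auto. apply Hno; eauto.
   + intros [u|] Hu; simpl; auto.
Qed.

Lemma ER_inf_lb (S : ER -> Prop) T : (forall r, S (Fin r) -> 0 <= r) ->
  (forall w, S w -> ER_le (Fin T) w) -> ER_le (Fin T) (ER_inf S).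
Proof. intros Hpos Hlb. destruct (inf_exists S Hpos) as [v Hv].
 pose proof (epsilon_spec (inhabits PInf) (is_glb_ER S) (ex_intro _ v Hv)) as Hs.
 fold (ER_inf S) in Hs. destruct Hs as [_ H2]. apply H2; auto. Qed.

Lemma rpow_nonneg x a : 0 <= rpow x a.
Proof. unfold rpow. destruct (Rlt_dec 0 x). unfold Rpower. left; apply exp_pos. lra. Qed.

Lemma pw_bound p z tau : 1 < p -> 0 <= z -> 0 < tau ->
  z <= tau + rpow z p / Rpower tau (p - 1).
Proof. intros Hp Hz Ht. assert (Hpt : 0 < Rpower tau (p-1)) by (unfold Rpower; apply exp_pos).
 destruct (Rle_dec z tau).
 - assert (0 <= rpow z p / Rpower tau (p - 1)). { unfold Rdiv; apply Rmult_le_pos; [apply rpow_nonneg | left; apply Rinv_0_lt_compat; auto]. } lra.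
 - assert (Hz' : 0 < z) by lra. unfold rpow. destruct (Rlt_dec 0 z); [|lra].
   replace p with (1 + (p-1)) at 1 by ring. rewrite Rpower_plus, Rpower_1 by lra.
   assert (Rpower tau (p-1) <= Rpower z (p-1)). { apply Rle_Rpower_l; lra. }
   assert (z <= z * Rpower z (p - 1) / Rpower tau (p - 1)).
   { apply Rmult_le_reg_r with (Rpower tau (p-1)); auto. unfold Rdiv. rewrite Rmult_assoc, Rinv_l by lra. nra. }
   lra. Qed.

Lemma double_sum N (a b : nat -> R) (F : nat -> nat -> R) :
  sumN N (fun i => sumN N (fun j => a i * b j * F i j)) = sumN N (fun i => sumN N (fun j => a i * b j * F i j)).
Proof. reflexivity. Qed.

Lemma dsum_diff N (a b G : nat -> R) :
  sumN N (fun i => sumN N (fun j => a i * b j * (G i - G j))) =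
  sumN N b * sumN N (fun i => a i * G i) - sumN N a * sumN N (fun j => b j * G j).
Proof.
 transitivity (sumN N (fun i => (a i * G i) * sumN N b - a i * sumN N (fun j => b j * G j))).
 - apply sumN_ext; intros i _. rewrite <- !sumN_scal, <- sumN_minus. apply sumN_ext; intros; ring.
 - rewrite sumN_minus. rewrite (sumN_ext N (fun i => a i * G i * sumN N b) (fun i => sumN N b * (a i * G i))) by (intros; ring).
   rewrite (sumN_ext N (fun i => a i * sumN N (fun j => b j * G j)) (fun i => sumN N (fun j => b j * G j) * a i)) by (intros; ring).
   rewrite !sumN_scal. ring. Qed.

Lemma dsum_prod N (a b : nat -> R) c :
  sumN N (fun i => sumN N (fun j => a i * b j * c)) = sumN N a * sumN N b * c.
Proof. rewrite (sumN_ext N _ (fun i => (a i * c) * sumN N b)).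
 2:{ intros. rewrite <- sumN_scal. apply sumN_ext; intros; ring. }
 rewrite (sumN_ext N (fun i => a i * c * sumN N b) (fun i => (c * sumN N b) * a i)) by (intros; ring).
 rewrite sumN_scal. ring. Qed.

Definition zval (eps : R) (G : nat -> R) i j := Rmax 0 (Rabs (G i - G j) - 2 * eps).

Lemma step_lemma p N (a b G : nat -> R) eps tau :
  1 < p -> 0 < eps -> 0 < tau ->
  (forall i, 0 <= a i) -> (forall j, 0 <= b j) ->
  0 < sumN N a -> 0 < sumN N b ->
  Rabs (sumN N (fun i => a i * G i) / sumN N a - sumN N (fun j => b j * G j) / sumN N b)
  <= 2 * eps + tau +
     sumN N (fun i => sumN N (fun j => a i * b j * rpow (zval eps G i j) p))
       / (sumN N a * sumN N b * Rpower tau (p - 1)).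
Proof.
 intros Hp He Ht Ha Hb HA HB. set (A := sumN N a) in *. set (B := sumN N b) in *.
 assert (Hpt : 0 < Rpower tau (p-1)) by (unfold Rpower; apply exp_pos).
 set (Z := sumN N (fun i => sumN N (fun j => a i * b j * rpow (zval eps G i j) p))).
 assert (Hkey : Rabs (B * sumN N (fun i => a i * G i) - A * sumN N (fun j => b j * G j))
   <= A * B * (2 * eps + tau) + Z / Rpower tau (p-1)).
 { unfold A, B; rewrite <- (dsum_diff N a b G). eapply Rle_trans. apply sumN_abs.
   eapply Rle_trans. apply sumN_le. intros i _. apply sumN_abs.
   apply Rle_trans with (sumN N (fun i => sumN N (fun j => a i * b j * (2*eps + tau) + a i * b j * rpow (zval eps G i j) p / Rpower tau (p-1)))).
   apply sumN_le. intros i _. apply sumN_le. intros j _.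
   rewrite Rabs_mult, Rabs_mult, (Rabs_right (a i)), (Rabs_right (b j)) by (apply Rle_ge; auto).
   assert (0 <= a i * b j) by (apply Rmult_le_pos; auto).
   assert (Hz : 0 <= zval eps G i j) by (unfold zval; apply Rmax_l).
   pose proof (pw_bound p _ tau Hp Hz Ht).
   assert (Rabs (G i - G j) <= 2 * eps + zval eps G i j).
   { unfold zval. pose proof (Rmax_r 0 (Rabs (G i - G j) - 2 * eps)). lra. }
   replace (a i * b j * (2 * eps + tau) + a i * b j * rpow (zval eps G i j) p / Rpower tau (p - 1))
     with (a i * b j * (2 * eps + tau + rpow (zval eps G i j) p / Rpower tau (p - 1))) by (field; lra).
   apply Rmult_le_compat_l; auto. lra.
   rewrite (sumN_ext N _ (fun i => sumN N (fun j => a i * b j * (2 * eps + tau)) + sumN N (fun j => a i * b j * rpow (zval eps G i j) p / Rpower tau (p - 1)))).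
   2:{ intros. rewrite <- sumN_plus. reflexivity. }
   rewrite sumN_plus, dsum_prod. fold A B. apply Rplus_le_compat_l.
   unfold Z, Rdiv. rewrite (sumN_ext N _ (fun i => / Rpower tau (p-1) * sumN N (fun j => a i * b j * rpow (zval eps G i j) p))).
   2:{ intros. rewrite <- sumN_scal. apply sumN_ext; intros; ring. }
   rewrite sumN_scal. lra. }
 replace (sumN N (fun i => a i * G i) / A - sumN N (fun j => b j * G j) / B)
   with ((B * sumN N (fun i => a i * G i) - A * sumN N (fun j => b j * G j)) / (A * B)) by (field; lra).
 unfold Rdiv at 1. rewrite Rabs_mult, Rabs_inv, (Rabs_right (A*B)) by nra.
 apply Rmult_le_reg_r with (A * B). nra. rewrite Rmult_assoc, Rinv_l by nra.
 replace ((2 * eps + tau + Z / (A * B * Rpower tau (p - 1))) * (A * B)) with (A * B * (2 * eps + tau) + Z / Rpower tau (p-1)) by (field; split; nra).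
 lra. Qed.

Lemma floor_nat n x : 0 <= x < INR n -> exists i, (i < n)%nat /\ INR i <= x < INR i + 1.
Proof. induction n; intros [H1 H2]. simpl in H2; lra.
 destruct (Rlt_dec x (INR n)).
 - destruct IHn as [i [Hi Hx]]; [lra|]. exists i; split; [lia|auto].
 - exists n. split. lia. rewrite S_INR in H2. lra. Qed.

Definition ind (lo hi i : nat) : R := if andb (Nat.leb lo i) (Nat.ltb i hi) then 1 else 0.

Lemma ind_cases lo hi i : (ind lo hi i = 1 /\ (lo <= i < hi)%nat) \/ ind lo hi i = 0.
Proof. unfold ind. destruct (Nat.leb lo i) eqn:E1; destruct (Nat.ltb i hi) eqn:E2; simpl; auto.
 left. apply Nat.leb_le in E1. apply Nat.ltb_lt in E2. auto. Qed.

Lemma ind_nonneg lo hi i : 0 <= ind lo hi i.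
Proof. destruct (ind_cases lo hi i) as [[H _]|H]; rewrite H; lra. Qed.

Lemma ind_count lo hi N : (lo <= hi)%nat ->
  sumN N (ind lo hi) = INR (Nat.min N hi) - INR (Nat.min N lo).
Proof. intros Hl. induction N. simpl; lra. cbn [sumN]. rewrite IHN. unfold ind.
 destruct (Nat.leb lo N) eqn:E1; destruct (Nat.ltb N hi) eqn:E2; cbn [andb];
 [apply Nat.leb_le in E1; apply Nat.ltb_lt in E2 | apply Nat.leb_le in E1; apply Nat.ltb_ge in E2
 | apply Nat.leb_gt in E1; apply Nat.ltb_lt in E2 | apply Nat.leb_gt in E1; apply Nat.ltb_ge in E2].
 - replace (Nat.min (S N) hi) with (S (Nat.min N hi)) by lia. replace (Nat.min (S N) lo) with (Nat.min N lo) by lia.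
   rewrite S_INR; ring.
 - replace (Nat.min (S N) hi) with (Nat.min N hi) by lia. replace (Nat.min (S N) lo) with (Nat.min N lo) by lia. ring.
 - replace (Nat.min (S N) hi) with (S (Nat.min N hi)) by lia. replace (Nat.min (S N) lo) with (S (Nat.min N lo)) by lia.
   rewrite !S_INR; ring.
 - lia. Qed.

Lemma ind_count' lo hi N : (lo <= hi <= N)%nat -> sumN N (ind lo hi) = INR hi - INR lo.
Proof. intros. rewrite ind_count by lia. f_equal; f_equal; lia. Qed.

Definition tg (Rr : R) (N : nat) (i : nat) : R := - Rr + INR i * (2 * Rr / INR N).

Lemma tg_mono Rr N i j : 0 < Rr -> (0 < N)%nat -> (i <= j)%nat -> tg Rr N i <= tg Rr N j.
Proof. intros. unfold tg. assert (0 < 2 * Rr / INR N). { apply Rdiv_lt_0_compat. lra. apply lt_0_INR; auto. }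
 apply le_INR in H1. nra. Qed.

Lemma rpow_le u v a : 0 < a -> 0 <= u <= v -> rpow u a <= rpow v a.
Proof. intros Ha [H1 H2]. unfold rpow. destruct (Rlt_dec 0 u); destruct (Rlt_dec 0 v); try lra.
 apply Rle_Rpower_l; lra. left; unfold Rpower; apply exp_pos. Qed.

Lemma integrand_nonneg p g x y : 0 <= besov_integrand p g x y.
Proof. unfold besov_integrand. destruct (Req_dec_T x y). lra.
 unfold Rdiv. apply Rmult_le_pos. apply rpow_nonneg. unfold rpow. destruct (Rlt_dec 0 (Rabs (x-y))).
 left; apply Rinv_0_lt_compat; unfold Rpower; apply exp_pos. rewrite Rinv_0; lra. Qed.

Lemma region_lemma p g r Rr N lo1 hi1 lo2 hi2 eps Lam :
  2 < p -> 0 < Rr -> (0 < N)%nat -> 0 < Lam ->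
  (forall K, lower_sums (besov_integrand p g) K -> K <= r) ->
  (forall x y, tg Rr N lo1 <= x <= tg Rr N hi1 -> tg Rr N lo2 <= y <= tg Rr N hi2 ->
     x <> y /\ Rabs (x - y) <= Lam) ->
  (forall i x, (lo1 <= i < hi1)%nat \/ (lo2 <= i < hi2)%nat ->
     tg Rr N i <= x <= tg Rr N (S i) -> Rabs (g x - g (tg Rr N i)) <= eps) ->
  (2 * Rr / INR N) * (2 * Rr / INR N) / Rpower Lam p *
  sumN N (fun i => sumN N (fun j => ind lo1 hi1 i * ind lo2 hi2 j *
     rpow (zval eps (fun k => g (tg Rr N k)) i j) p)) <= r.
Proof.
 intros Hp HR HN HL Hr Hgeo Hcont. set (h := 2 * Rr / INR N).
 set (G := fun k => g (tg Rr N k)).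
 set (m := fun i j => ind lo1 hi1 i * ind lo2 hi2 j * rpow (zval eps G i j) p / Rpower Lam p).
 assert (HK : lower_sums (besov_integrand p g)
   (sumN N (fun i => sumN N (fun j => h * h * m i j)))).
 { exists Rr, N, m. split; [auto|split; [|reflexivity]].
   intros i j x y Hi Hj Hx Hy. fold h in Hx, Hy.
   change (- Rr + INR i * h) with (tg Rr N i) in Hx. change (- Rr + INR (S i) * h) with (tg Rr N (S i)) in Hx.
   change (- Rr + INR j * h) with (tg Rr N j) in Hy. change (- Rr + INR (S j) * h) with (tg Rr N (S j)) in Hy.
   unfold m. destruct (ind_cases lo1 hi1 i) as [[E1 Hi1]|E1]; destruct (ind_cases lo2 hi2 j) as [[E2 Hj2]|E2];
   rewrite ?E1, ?E2; try (replace (0 * _ * _ / _) with 0 by (unfold Rdiv; ring); apply integrand_nonneg);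
   try (replace (1 * 0 * _ / _) with 0 by (unfold Rdiv; ring); apply integrand_nonneg).
   assert (Hxr : tg Rr N lo1 <= x <= tg Rr N hi1).
   { split. apply Rle_trans with (tg Rr N i). apply tg_mono; auto; lia. lra.
     apply Rle_trans with (tg Rr N (S i)). lra. apply tg_mono; auto; lia. }
   assert (Hyr : tg Rr N lo2 <= y <= tg Rr N hi2).
   { split. apply Rle_trans with (tg Rr N j). apply tg_mono; auto; lia. lra.
     apply Rle_trans with (tg Rr N (S j)). lra. apply tg_mono; auto; lia. }
   destruct (Hgeo x y Hxr Hyr) as [Hne Hd].
   pose proof (Hcont i x (or_introl Hi1) Hx) as C1. pose proof (Hcont j y (or_intror Hj2) Hy) as C2.
   unfold besov_integrand. destruct (Req_dec_T x y); [contradiction|].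
   assert (Hxy : 0 < Rabs (x - y)) by (apply Rabs_pos_lt; lra).
   assert (Hz : zval eps G i j <= Rabs (g x - g y)).
   { unfold zval, G. apply Rmax_lub. apply Rabs_pos.
     assert (forall a b c d : R, Rabs (a - b) <= Rabs (c - d) + Rabs (c - a) + Rabs (d - b)).
     { intros. unfold Rabs; repeat destruct Rcase_abs; lra. }
     pose proof (H (g (tg Rr N i)) (g (tg Rr N j)) (g x) (g y)). lra. }
   assert (Hz0 : 0 <= zval eps G i j) by (unfold zval; apply Rmax_l).
   assert (A1 : rpow (zval eps G i j) p <= rpow (Rabs (g x - g y)) p) by (apply rpow_le; lra).
   assert (A2 : rpow (Rabs (x - y)) p <= Rpower Lam p).
   { unfold rpow. destruct (Rlt_dec 0 (Rabs (x-y))); [|lra]. apply Rle_Rpower_l; lra. }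
   assert (A3 : 0 < rpow (Rabs (x - y)) p). { unfold rpow. destruct (Rlt_dec 0 (Rabs (x-y))); [|lra]. unfold Rpower; apply exp_pos. }
   pose proof (rpow_nonneg (zval eps G i j) p).
   replace (1 * 1 * rpow (zval eps G i j) p / Rpower Lam p) with (rpow (zval eps G i j) p / Rpower Lam p) by (unfold Rdiv; ring).
   unfold Rdiv. apply Rle_trans with (rpow (zval eps G i j) p * / rpow (Rabs (x - y)) p).
   apply Rmult_le_compat_l; auto. apply Rinv_le_contravar; auto.
   apply Rmult_le_compat_r. left; apply Rinv_0_lt_compat; auto. auto. }
 apply Hr in HK. eapply Rle_trans; [|exact HK]. right.
 unfold m. rewrite <- sumN_scal. apply sumN_ext; intros. rewrite <- sumN_scal. apply sumN_ext; intros.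
 unfold G. unfold Rdiv; ring. Qed.

Definition sig_ (p : R) := 1 - 2 / p.
Definition Qc (p : R) := 1 + 16 * Rpower 4 p.
Definition avg N lo hi (G : nat -> R) := sumN N (fun i => ind lo hi i * G i) / sumN N (ind lo hi).

Lemma Rpower_pos x y : 0 < Rpower x y.
Proof. unfold Rpower; apply exp_pos. Qed.

Lemma power_alg p l rho r h n1 n2 :
  2 < p -> 0 < l -> 0 < rho -> 0 < h -> r <= Rpower rho p ->
  l / 4 <= n1 * h -> l / 4 <= n2 * h ->
  (r * Rpower (4 * l) p / (h * h)) / (n1 * n2 * Rpower (Rpower l (sig_ p) * rho) (p - 1))
  <= 16 * Rpower 4 p * (Rpower l (sig_ p) * rho).
Proof.
 intros Hp Hl Hr Hh Hrr H1 H2.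
 assert (Hn1 : 0 < n1). { apply Rmult_lt_reg_r with h; auto. lra. }
 assert (Hn2 : 0 < n2). { apply Rmult_lt_reg_r with h; auto. lra. }
 set (s := sig_ p).
 assert (E1 : Rpower (Rpower l s * rho) (p - 1) = Rpower l (s * (p-1)) * Rpower rho (p-1)).
 { rewrite <- Rpower_mult_distr by (try apply Rpower_pos; auto). rewrite Rpower_mult. auto. }
 assert (E2 : Rpower (4 * l) p = Rpower 4 p * (Rpower l s * (l * l) * Rpower l (s * (p-1)))).
 { rewrite <- Rpower_mult_distr by lra. f_equal.
   replace (l * l) with (Rpower l 2). rewrite <- !Rpower_plus. f_equal. unfold s, sig_. field. lra.
   replace 2 with (INR 2) by (simpl; ring). rewrite Rpower_pow by auto. simpl; ring. }
 assert (E3 : Rpower rho p = rho * Rpower rho (p - 1)).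
 { replace p with (1 + (p-1)) at 1 by ring. rewrite Rpower_plus, Rpower_1; auto. }
 rewrite E1, E2.
 pose proof (Rpower_pos l s). pose proof (Rpower_pos l (s*(p-1))). pose proof (Rpower_pos rho (p-1)).
 pose proof (Rpower_pos 4 p).
 assert (Hr0 : r * Rpower 4 p * (Rpower l s * (l * l) * Rpower l (s * (p - 1))) <= Rpower rho p * Rpower 4 p * (Rpower l s * (l * l) * Rpower l (s * (p - 1)))).
 { apply Rmult_le_compat_r. apply Rmult_le_pos; [apply Rmult_le_pos|]; try lra; apply Rmult_le_pos; lra.
   apply Rmult_le_compat_r; lra. }
 assert (Hnh : l * l / 16 <= (n1 * h) * (n2 * h)).
 { assert (0 <= l/4) by lra. replace (l * l / 16) with ((l/4) * (l/4)) by field. apply Rmult_le_compat; lra. }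
 set (A := Rpower l s) in *. set (B := Rpower l (s * (p - 1))) in *. set (C := Rpower rho (p - 1)) in *.
 set (D := Rpower 4 p) in *.
 rewrite E3 in Hr0.
 apply Rle_trans with ((rho * C * D * (A * (l * l) * B)) / (h * h) / (n1 * n2 * (B * C))).
 { unfold Rdiv. apply Rmult_le_compat_r. left; apply Rinv_0_lt_compat. apply Rmult_lt_0_compat; [nra|nra].
   apply Rmult_le_compat_r. left; apply Rinv_0_lt_compat; nra. rewrite <- Rmult_assoc in Hr0. lra. }
 replace (rho * C * D * (A * (l * l) * B) / (h * h) / (n1 * n2 * (B * C)))
   with (D * A * rho * (l * l) / ((n1 * h) * (n2 * h))) by (field; repeat split; lra).
 apply Rle_trans with (D * A * rho * (l * l) / (l * l / 16)).
 { unfold Rdiv. apply Rmult_le_compat_l. assert (0 < D * A * rho) by (repeat apply Rmult_lt_0_compat; auto). nra.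
   apply Rinv_le_contravar. nra. auto. }
 right. field. lra. Qed.

Lemma step_full p g r rho Rr N lo1 hi1 lo2 hi2 eps l :
  2 < p -> 0 < Rr -> (0 < N)%nat -> 0 < l -> 0 < eps -> 0 < rho -> r <= Rpower rho p ->
  (forall K, lower_sums (besov_integrand p g) K -> K <= r) ->
  (lo1 < hi1 <= N)%nat -> (lo2 < hi2 <= N)%nat ->
  l / 4 <= (INR hi1 - INR lo1) * (2 * Rr / INR N) ->
  l / 4 <= (INR hi2 - INR lo2) * (2 * Rr / INR N) ->
  (forall x y, tg Rr N lo1 <= x <= tg Rr N hi1 -> tg Rr N lo2 <= y <= tg Rr N hi2 ->
     x <> y /\ Rabs (x - y) <= 4 * l) ->
  (forall i x, (lo1 <= i < hi1)%nat \/ (lo2 <= i < hi2)%nat ->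
     tg Rr N i <= x <= tg Rr N (S i) -> Rabs (g x - g (tg Rr N i)) <= eps) ->
  Rabs (avg N lo1 hi1 (fun k => g (tg Rr N k)) - avg N lo2 hi2 (fun k => g (tg Rr N k)))
  <= 2 * eps + Qc p * Rpower l (sig_ p) * rho.
Proof.
 intros Hp HR HN Hl He Hrho Hrr Hr H1 H2 Hc1 Hc2 Hgeo Hcont.
 assert (HLam : 0 < 4 * l) by lra.
 pose proof (region_lemma p g r Rr N lo1 hi1 lo2 hi2 eps (4 * l) Hp HR HN HLam Hr Hgeo Hcont) as Hreg.
 set (h := 2 * Rr / INR N) in *.
 assert (Hh : 0 < h). { unfold h. apply Rdiv_lt_0_compat. lra. apply lt_0_INR; auto. }
 set (tau := Rpower l (sig_ p) * rho).
 assert (Htau : 0 < tau) by (apply Rmult_lt_0_compat; auto; apply Rpower_pos).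
 assert (Hn1 : sumN N (ind lo1 hi1) = INR hi1 - INR lo1) by (apply ind_count'; lia).
 assert (Hn2 : sumN N (ind lo2 hi2) = INR hi2 - INR lo2) by (apply ind_count'; lia).
 assert (P1 : 0 < INR hi1 - INR lo1). { assert (INR lo1 < INR hi1) by (apply lt_INR; lia). lra. }
 assert (P2 : 0 < INR hi2 - INR lo2). { assert (INR lo2 < INR hi2) by (apply lt_INR; lia). lra. }
 pose proof (step_lemma p N (ind lo1 hi1) (ind lo2 hi2) (fun k => g (tg Rr N k)) eps tau ltac:(lra) He Htau
   (ind_nonneg lo1 hi1) (ind_nonneg lo2 hi2) ltac:(lra) ltac:(lra)) as Hst.
 unfold avg. eapply Rle_trans. exact Hst.
 set (Z := sumN N (fun i => sumN N (fun j => ind lo1 hi1 i * ind lo2 hi2 j * rpow (zval eps (fun k => g (tg Rr N k)) i j) p))) in *.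
 assert (HZ : Z <= r * Rpower (4 * l) p / (h * h)).
 { pose proof (Rpower_pos (4*l) p). apply Rmult_le_reg_l with (h * h / Rpower (4 * l) p).
   apply Rdiv_lt_0_compat; nra. replace (h * h / Rpower (4 * l) p * (r * Rpower (4 * l) p / (h * h))) with r by (field; split; lra). lra. }
 rewrite Hn1, Hn2.
 pose proof (power_alg p l rho r h (INR hi1 - INR lo1) (INR hi2 - INR lo2) Hp Hl Hrho Hh Hrr Hc1 Hc2) as Hpa.
 fold tau in Hpa.
 assert (Z / ((INR hi1 - INR lo1) * (INR hi2 - INR lo2) * Rpower tau (p - 1)) <=
   r * Rpower (4 * l) p / (h * h) / ((INR hi1 - INR lo1) * (INR hi2 - INR lo2) * Rpower tau (p - 1))).
 { unfold Rdiv. apply Rmult_le_compat_r; auto. left; apply Rinv_0_lt_compat.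
   apply Rmult_lt_0_compat. nra. apply Rpower_pos. }
 unfold Qc. unfold tau in *. lra. Qed.

Lemma avg_close N lo hi G c eta :
  (lo < hi <= N)%nat -> (forall i, (lo <= i < hi)%nat -> Rabs (G i - c) <= eta) ->
  Rabs (avg N lo hi G - c) <= eta.
Proof. intros Hl HG. unfold avg. rewrite ind_count' by lia.
 assert (P : 0 < INR hi - INR lo). { assert (INR lo < INR hi) by (apply lt_INR; lia). lra. }
 rewrite <- ind_count' with (N := N) in P |- * by lia.
 set (n := sumN N (ind lo hi)) in *.
 replace (sumN N (fun i => ind lo hi i * G i) / n - c) with (sumN N (fun i => ind lo hi i * (G i - c)) / n).
 2:{ unfold Rdiv. rewrite (sumN_ext N _ (fun i => ind lo hi i * G i - c * ind lo hi i)) by (intros; ring).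
     rewrite sumN_minus, sumN_scal. fold n. field. lra. }
 unfold Rdiv. rewrite Rabs_mult, Rabs_inv, (Rabs_right n) by lra.
 apply Rmult_le_reg_r with n; auto. rewrite Rmult_assoc, Rinv_l, Rmult_1_r by lra.
 eapply Rle_trans. apply sumN_abs. unfold n. rewrite <- sumN_scal. apply sumN_le. intros i _.
 destruct (ind_cases lo hi i) as [[E Hi]|E]; rewrite E. rewrite Rabs_mult, Rabs_R1. specialize (HG i Hi). lra.
 rewrite Rabs_mult, Rabs_R0. lra. Qed.

Lemma nat_unbounded X : exists N : nat, X < INR N.
Proof. destruct (archimed (Rabs X)) as [H1 _]. exists (Z.to_nat (up (Rabs X))).
 rewrite INR_IZR_INZ. rewrite Z2Nat.id. pose proof (Rle_abs X). lra.
 apply le_IZR. pose proof (Rabs_pos X). lra. Qed.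

Lemma interval_idx Rr N u v : 0 < Rr -> (0 < N)%nat -> -Rr <= u -> v < Rr -> u < v ->
  4 * (2 * Rr / INR N) <= v - u ->
  exists lo hi, (lo < hi <= N)%nat /\ u <= tg Rr N lo /\ tg Rr N hi <= v /\
    (v - u) / 2 <= (INR hi - INR lo) * (2 * Rr / INR N).
Proof.
 intros HR HN Hu Hv Huv H4. set (h := 2 * Rr / INR N) in *.
 assert (HNr : 0 < INR N) by (apply lt_0_INR; auto).
 assert (Hh : 0 < h) by (unfold h; apply Rdiv_lt_0_compat; lra).
 assert (HhN : h * INR N = 2 * Rr) by (unfold h; field; lra).
 destruct (floor_nat N ((u + Rr) / h)) as [i [Hi [Hi1 Hi2]]].
 { split. apply Rmult_le_pos; [lra| left; apply Rinv_0_lt_compat; auto].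
   apply Rmult_lt_reg_r with h; auto. unfold Rdiv; rewrite Rmult_assoc, Rinv_l, Rmult_1_r by lra. lra. }
 destruct (floor_nat N ((v + Rr) / h)) as [j [Hj [Hj1 Hj2]]].
 { split. apply Rmult_le_pos; [lra| left; apply Rinv_0_lt_compat; auto].
   apply Rmult_lt_reg_r with h; auto. unfold Rdiv; rewrite Rmult_assoc, Rinv_l, Rmult_1_r by lra. lra. }
 assert (A1 : INR i * h <= u + Rr). { apply Rmult_le_compat_r with (r := h) in Hi1; [|lra]. unfold Rdiv in Hi1. rewrite Rmult_assoc, Rinv_l, Rmult_1_r in Hi1 by lra. lra. }
 assert (A2 : u + Rr < (INR i + 1) * h). { apply Rmult_lt_compat_r with (r := h) in Hi2; [|lra]. unfold Rdiv in Hi2. rewrite Rmult_assoc, Rinv_l, Rmult_1_r in Hi2 by lra. lra. }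
 assert (B1 : INR j * h <= v + Rr). { apply Rmult_le_compat_r with (r := h) in Hj1; [|lra]. unfold Rdiv in Hj1. rewrite Rmult_assoc, Rinv_l, Rmult_1_r in Hj1 by lra. lra. }
 assert (B2 : v + Rr < (INR j + 1) * h). { apply Rmult_lt_compat_r with (r := h) in Hj2; [|lra]. unfold Rdiv in Hj2. rewrite Rmult_assoc, Rinv_l, Rmult_1_r in Hj2 by lra. lra. }
 assert (D : (v - u) / 2 <= (INR j - INR (S i)) * h). { rewrite S_INR. nra. }
 assert (Hlt : (S i < j)%nat). { apply INR_lt. assert (0 < (INR j - INR (S i)) * h) by lra.
   assert (0 < INR j - INR (S i)). { apply Rmult_lt_reg_r with h; auto. lra. } lra. }
 exists (S i), j. split. lia. unfold tg; fold h. split; [rewrite S_INR; nra|]. split; [nra|]. auto. Qed.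

Lemma choice_nat (P : nat -> nat * nat -> Prop) : (forall k, exists x, P k x) -> exists f, forall k, P k (f k).
Proof. intros H. exists (fun k => proj1_sig (constructive_indefinite_description _ (H k))).
 intro k. apply (proj2_sig (constructive_indefinite_description _ (H k))). Qed.

Lemma lpow c s k : 0 < c -> Rpower (c * (/2)^k) s = Rpower c s * (Rpower (/2) s)^k.
Proof. intros Hc. assert (0 < (/2)^k) by (apply pow_lt; lra).
 rewrite <- Rpower_mult_distr by auto. f_equal.
 rewrite <- (Rpower_pow k (Rpower (/2) s)) by (apply Rpower_pos). rewrite <- (Rpower_pow k (/2)) by lra.
 rewrite !Rpower_mult. f_equal; ring. Qed.

Lemma q_lt1 p : 2 < p -> 0 <= Rpower (/2) (sig_ p) < 1.
Proof. intros Hp. split. left; apply Rpower_pos. unfold Rpower.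
 rewrite <- exp_0. apply exp_increasing. unfold sig_.
 assert (ln (/2) < 0). { rewrite <- ln_1. apply ln_increasing; lra. }
 assert (0 < 1 - 2/p). { assert (2/p < 1). { apply Rmult_lt_reg_r with p. lra. unfold Rdiv; rewrite Rmult_assoc, Rinv_l by lra. lra. } lra. }
 nra. Qed.

Definition Cp (p : R) := 6 * Qc p / (1 - Rpower (/2) (sig_ p)).

Lemma Qc_pos p : 0 < Qc p.
Proof. unfold Qc. pose proof (Rpower_pos 4 p). lra. Qed.

Lemma Cp_pos p : 2 < p -> 0 < Cp p.
Proof. intros. unfold Cp. pose proof (q_lt1 p H). pose proof (Qc_pos p). apply Rdiv_lt_0_compat; lra. Qed.

Lemma sig_pos p : 2 < p -> 0 < sig_ p.
Proof. intros Hp. unfold sig_. assert (2/p < 1). { apply Rmult_lt_reg_r with p. lra. unfold Rdiv; rewrite Rmult_assoc, Rinv_l by lra. lra. } lra. Qed.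

Lemma sum_geom_bound K e Q rho c q :
  0 <= Q -> 0 <= rho -> 0 <= c -> 0 <= q < 1 ->
  sumN K (fun k => 2 * e + Q * (c * q ^ k) * rho) <= 2 * e * INR K + Q * rho * c / (1 - q).
Proof. intros. rewrite sumN_plus.
 replace (sumN K (fun _ => 2 * e)) with (2 * e * INR K).
 2:{ clear; induction K; simpl sumN. simpl; ring. rewrite <- IHK, S_INR. ring. }
 rewrite (sumN_ext K _ (fun k => (Q * c * rho) * q ^ k)) by (intros; ring).
 rewrite sumN_scal. pose proof (geom_sum K q H2).
 assert (0 <= Q * c * rho) by (repeat apply Rmult_le_pos; auto).
 replace (Q * rho * c / (1 - q)) with (Q * c * rho * / (1 - q)) by (field; lra).
 apply Rplus_le_compat_l. apply Rmult_le_compat_l; auto. Qed.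

Lemma geo_pair Rr N lo1 hi1 lo2 hi2 u1 v1 u2 v2 l :
  u1 <= tg Rr N lo1 -> tg Rr N hi1 <= v1 -> u2 <= tg Rr N lo2 -> tg Rr N hi2 <= v2 ->
  v1 < u2 -> v2 - u1 <= 4 * l ->
  forall x y, tg Rr N lo1 <= x <= tg Rr N hi1 -> tg Rr N lo2 <= y <= tg Rr N hi2 ->
     x <> y /\ Rabs (x - y) <= 4 * l.
Proof. intros. split. lra. rewrite Rabs_left by lra. lra. Qed.

Lemma tg_S Rr N i : tg Rr N (S i) = tg Rr N i + 2 * Rr / INR N.
Proof. unfold tg. rewrite S_INR. ring. Qed.

Lemma cell_cont g a b eps (delta : R) Rr N lo hi :
  (forall x y, a <= x <= b -> a <= y <= b -> Rabs (x - y) < delta -> Rabs (g x - g y) < eps) ->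
  0 < Rr -> (0 < N)%nat -> 2 * Rr / INR N < delta ->
  a <= tg Rr N lo -> tg Rr N hi <= b ->
  forall i x, (lo <= i < hi)%nat -> tg Rr N i <= x <= tg Rr N (S i) -> Rabs (g x - g (tg Rr N i)) <= eps.
Proof. intros Hu HR HN Hh Ha Hb i x Hi Hx.
 assert (tg Rr N lo <= tg Rr N i) by (apply tg_mono; auto; lia).
 assert (tg Rr N (S i) <= tg Rr N hi) by (apply tg_mono; auto; lia).
 rewrite tg_S in Hx, H0. left. apply Hu; try lra. rewrite Rabs_right; lra. Qed.

Lemma core p g a b r rho : 2 < p -> continuity g -> a < b -> 0 < rho -> r <= Rpower rho p ->
  (forall K, lower_sums (besov_integrand p g) K -> K <= r) ->
  Rabs (g b - g a) <= Cp p * Rpower (b - a) (sig_ p) * rho.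
Proof.
 intros Hp Hg Hab Hrho Hrr Hr.
 set (al := Rabs (g b - g a)).
 pose proof (Cp_pos p Hp) as HCp. pose proof (sig_pos p Hp) as Hsig. pose proof (q_lt1 p Hp) as Hq.
 assert (HLs : 0 < Rpower (b - a) (sig_ p)) by apply Rpower_pos.
 destruct (Rle_lt_dec al 0) as [H0|Hal]. { assert (0 < Cp p * Rpower (b - a) (sig_ p) * rho) by (apply Rmult_lt_0_compat; [apply Rmult_lt_0_compat|]; auto). lra. }
 assert (Hcpt : forall x, a <= x <= b -> continuity_pt g x) by (intros; apply Hg).
 destruct (Heine_cor2 Hcpt (mkposreal (al/8) ltac:(lra))) as [d1 Hd1]. simpl in Hd1.
 set (L := b - a). set (l := fun k : nat => L / 8 * (/2)^k).
 assert (Hl : forall k, 0 < l k). { intros; unfold l. apply Rmult_lt_0_compat. unfold L; lra. apply pow_lt; lra. }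
 assert (HlS : forall k, l (S k) = l k / 2). { intros; unfold l. simpl. field. }
 assert (Hl0 : l O = L / 8) by (unfold l; simpl; ring).
 assert (Hlle : forall k, l k <= L / 8).
 { induction k. rewrite Hl0; lra. rewrite HlS. specialize (Hl k). lra. }
 destruct (pow_lt_1_zero (/2) ltac:(rewrite Rabs_right; lra) (d1 / (3 * (L / 8)))) as [K HK].
 { apply Rdiv_lt_0_compat. apply cond_pos. unfold L; lra. }
 specialize (HK K (le_n K)). rewrite Rabs_right in HK by (apply Rle_ge, pow_le; lra).
 assert (HlK : 3 * l K < d1).
 { unfold l. assert (0 < 3 * (L/8)) by (unfold L; lra).
   apply Rmult_lt_compat_l with (r := 3 * (L/8)) in HK; auto.
   replace (3 * (L / 8) * (d1 / (3 * (L / 8)))) with (pos d1) in HK by (field; unfold L; lra). lra. }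
 set (eps := al / (8 * (2 * INR K + 1))).
 assert (Heps : 0 < eps). { unfold eps. apply Rdiv_lt_0_compat; auto. pose proof (pos_INR K). lra. }
 destruct (Heine_cor2 Hcpt (mkposreal eps Heps)) as [d2 Hd2]. simpl in Hd2.
 set (Rr := Rabs a + Rabs b + 1).
 assert (HR : 0 < Rr) by (unfold Rr; pose proof (Rabs_pos a); pose proof (Rabs_pos b); lra).
 assert (HaR : - Rr < a < Rr) by (unfold Rr; pose proof (Rabs_pos b); unfold Rabs; repeat destruct Rcase_abs; lra).
 assert (HbR : - Rr < b < Rr) by (unfold Rr; pose proof (Rabs_pos a); unfold Rabs; repeat destruct Rcase_abs; lra).
 set (hm := Rmin (l K / 4) (d2 / 2)).
 assert (Hhm : 0 < hm). { unfold hm. apply Rmin_pos. specialize (Hl K); lra. pose proof (cond_pos d2); lra. }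
 destruct (nat_unbounded (2 * Rr / hm)) as [N HN].
 assert (HN0 : (0 < N)%nat). { destruct N. simpl in HN. assert (0 < 2 * Rr / hm) by (apply Rdiv_lt_0_compat; lra). lra. lia. }
 assert (HNr : 0 < INR N) by (apply lt_0_INR; auto).
 set (h := 2 * Rr / INR N).
 assert (Hh : 0 < h) by (unfold h; apply Rdiv_lt_0_compat; lra).
 assert (Hhm2 : h < hm).
 { unfold h. apply Rmult_lt_reg_r with (INR N / hm). apply Rdiv_lt_0_compat; lra.
   replace (2 * Rr / INR N * (INR N / hm)) with (2 * Rr / hm) by (field; lra).
   replace (hm * (INR N / hm)) with (INR N) by (field; lra). lra. }
 assert (Hh1 : h <= l K / 4) by (pose proof (Rmin_l (l K / 4) (d2/2)); fold hm in H; lra).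
 assert (Hh2 : h < d2) by (pose proof (Rmin_r (l K / 4) (d2/2)); fold hm in H; pose proof (cond_pos d2); lra).
 assert (HlK4 : forall k, (k <= K)%nat -> 4 * h <= l k).
 { intros k Hk. assert (l K <= l k). { clear -Hk Hl HlS. induction Hk. lra. rewrite HlS. specialize (Hl m). lra. } lra. }
 assert (HA : forall k, exists x : nat * nat, (k <= K)%nat ->
   (fst x < snd x <= N)%nat /\ a + 2 * l k <= tg Rr N (fst x) /\ tg Rr N (snd x) <= a + 3 * l k /\
   l k / 2 <= (INR (snd x) - INR (fst x)) * h).
 { intros k. destruct (le_lt_dec k K) as [Hk|Hk].
   - destruct (interval_idx Rr N (a + 2 * l k) (a + 3 * l k) HR HN0) as [lo [hi Hlh]].
     + specialize (Hl k); lra.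
     + specialize (Hlle k); unfold L in Hlle; lra.
     + specialize (Hl k); lra.
     + specialize (HlK4 k Hk). fold h. lra.
     + exists (lo, hi). intros _. simpl. fold h in Hlh. replace (l k / 2) with ((a + 3 * l k - (a + 2 * l k)) / 2) by field. exact Hlh.
   - exists (O, O). intros; lia. }
 assert (HB : forall k, exists x : nat * nat, (k <= K)%nat ->
   (fst x < snd x <= N)%nat /\ b - 3 * l k <= tg Rr N (fst x) /\ tg Rr N (snd x) <= b - 2 * l k /\
   l k / 2 <= (INR (snd x) - INR (fst x)) * h).
 { intros k. destruct (le_lt_dec k K) as [Hk|Hk].
   - destruct (interval_idx Rr N (b - 3 * l k) (b - 2 * l k) HR HN0) as [lo [hi Hlh]].
     + specialize (Hlle k); unfold L in Hlle; lra.
     + specialize (Hl k); lra.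
     + specialize (Hl k); lra.
     + specialize (HlK4 k Hk). fold h. lra.
     + exists (lo, hi). intros _. simpl. fold h in Hlh. replace (l k / 2) with ((b - 2 * l k - (b - 3 * l k)) / 2) by field. exact Hlh.
   - exists (O, O). intros; lia. }
 destruct (choice_nat _ HA) as [fA HfA]. destruct (choice_nat _ HB) as [fB HfB].
 set (G := fun k => g (tg Rr N k)).
 set (SA := fun k => avg N (fst (fA k)) (snd (fA k)) G).
 set (SB := fun k => avg N (fst (fB k)) (snd (fB k)) G).
 set (Q := Qc p). set (s := sig_ p).
 assert (Hcc : forall lo hi, a <= tg Rr N lo -> tg Rr N hi <= b ->
   forall i x, (lo <= i < hi)%nat -> tg Rr N i <= x <= tg Rr N (S i) -> Rabs (g x - g (tg Rr N i)) <= eps).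
 { intros lo hi H1 H2. apply (cell_cont g a b eps d2 Rr N lo hi Hd2 HR HN0); auto. }
 assert (StepA : forall k, (k < K)%nat -> Rabs (SA (S k) - SA k) <= 2 * eps + Q * Rpower (l k) s * rho).
 { intros k Hk. destruct (HfA (S k) ltac:(lia)) as [I1 [I2 [I3 I4]]]. destruct (HfA k ltac:(lia)) as [J1 [J2 [J3 J4]]].
   rewrite HlS in I2, I3, I4. pose proof (Hl k). pose proof (Hlle k). unfold L in *.
   apply (step_full p g r rho Rr N _ _ _ _ eps (l k) Hp HR HN0 (Hl k) Heps Hrho Hrr Hr I1 J1); fold h; try lra.
   - apply (geo_pair Rr N _ _ _ _ (a + l k) (a + 3 * (l k / 2)) (a + 2 * l k) (a + 3 * l k)); lra.
   - intros i x [Hi|Hi]; (eapply Hcc; [| | exact Hi]); lra. }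
 assert (StepB : forall k, (k < K)%nat -> Rabs (SB (S k) - SB k) <= 2 * eps + Q * Rpower (l k) s * rho).
 { intros k Hk. destruct (HfB (S k) ltac:(lia)) as [I1 [I2 [I3 I4]]]. destruct (HfB k ltac:(lia)) as [J1 [J2 [J3 J4]]].
   rewrite HlS in I2, I3, I4. pose proof (Hl k). pose proof (Hlle k). unfold L in *.
   rewrite Rabs_minus_sym.
   apply (step_full p g r rho Rr N _ _ _ _ eps (l k) Hp HR HN0 (Hl k) Heps Hrho Hrr Hr J1 I1); fold h; try lra.
   - apply (geo_pair Rr N _ _ _ _ (b - 3 * l k) (b - 2 * l k) (b - 3 * (l k / 2)) (b - l k)); lra.
   - intros i x [Hi|Hi]; (eapply Hcc; [| | exact Hi]); lra. }
 assert (StepM : Rabs (SA O - SB O) <= 2 * eps + Q * Rpower (l O) s * rho).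
 { destruct (HfA O ltac:(lia)) as [I1 [I2 [I3 I4]]]. destruct (HfB O ltac:(lia)) as [J1 [J2 [J3 J4]]].
   rewrite Hl0 in I2, I3, I4, J2, J3, J4. pose proof (Hl O). rewrite Hl0 in H. unfold L in *.
   apply (step_full p g r rho Rr N _ _ _ _ eps (l O) Hp HR HN0 (Hl O) Heps Hrho Hrr Hr I1 J1); fold h; rewrite ?Hl0; try lra.
   - apply (geo_pair Rr N _ _ _ _ (a + 2 * ((b-a)/8)) (a + 3 * ((b-a)/8)) (b - 3 * ((b-a)/8)) (b - 2 * ((b-a)/8))); lra.
   - intros i x [Hi|Hi]; (eapply Hcc; [| | exact Hi]); lra. }
 assert (EndA : Rabs (SA K - g a) <= al / 8).
 { destruct (HfA K ltac:(lia)) as [I1 [I2 [I3 I4]]]. apply avg_close; auto. intros i Hi. unfold G.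
   assert (tg Rr N (fst (fA K)) <= tg Rr N i) by (apply tg_mono; auto; lia).
   assert (tg Rr N i <= tg Rr N (snd (fA K))) by (apply tg_mono; auto; lia).
   pose proof (Hl K). pose proof (Hlle K). unfold L in *.
   left. apply Hd1; try lra. rewrite Rabs_right; lra. }
 assert (EndB : Rabs (SB K - g b) <= al / 8).
 { destruct (HfB K ltac:(lia)) as [I1 [I2 [I3 I4]]]. apply avg_close; auto. intros i Hi. unfold G.
   assert (tg Rr N (fst (fB K)) <= tg Rr N i) by (apply tg_mono; auto; lia).
   assert (tg Rr N i <= tg Rr N (snd (fB K))) by (apply tg_mono; auto; lia).
   pose proof (Hl K). pose proof (Hlle K). unfold L in *.
   left. apply Hd1; try lra. rewrite Rabs_left; lra. }
 assert (Hls : forall k, Rpower (l k) s = Rpower (L / 8) s * (Rpower (/2) s) ^ k).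
 { intros; unfold l; apply lpow. unfold L; lra. }
 assert (TA : Rabs (SA O - SA K) <= 2 * eps * INR K + Q * rho * Rpower (L/8) s / (1 - Rpower (/2) s)).
 { eapply Rle_trans. apply tele. eapply Rle_trans. apply sumN_le. intros k Hk. apply StepA; auto.
   rewrite (sumN_ext K _ (fun k => 2 * eps + Q * (Rpower (L / 8) s * (Rpower (/2) s) ^ k) * rho)) by (intros; rewrite Hls; ring).
   apply sum_geom_bound; auto. unfold Q; left; apply Qc_pos. lra. left; apply Rpower_pos. }
 assert (TB : Rabs (SB O - SB K) <= 2 * eps * INR K + Q * rho * Rpower (L/8) s / (1 - Rpower (/2) s)).
 { eapply Rle_trans. apply tele. eapply Rle_trans. apply sumN_le. intros k Hk. apply StepB; auto.
   rewrite (sumN_ext K _ (fun k => 2 * eps + Q * (Rpower (L / 8) s * (Rpower (/2) s) ^ k) * rho)) by (intros; rewrite Hls; ring).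
   apply sum_geom_bound; auto. unfold Q; left; apply Qc_pos. lra. left; apply Rpower_pos. }
 assert (Hchain : al <= Rabs (SA K - g a) + Rabs (SA O - SA K) + Rabs (SA O - SB O) + Rabs (SB O - SB K) + Rabs (SB K - g b)).
 { unfold al. assert (forall u v w x y z : R, Rabs (z - u) <= Rabs (v - u) + Rabs (w - v) + Rabs (w - x) + Rabs (x - y) + Rabs (y - z)).
   { intros. unfold Rabs; repeat destruct Rcase_abs; lra. }
   apply H. }
 rewrite Hl0 in StepM.
 assert (E1 : 2 * eps * (2 * INR K + 1) = al / 4) by (unfold eps; field; pose proof (pos_INR K); lra).
 assert (HLL : Rpower (L / 8) s <= Rpower L s). { apply Rle_Rpower_l. unfold s; lra. unfold L; split; lra. }
 set (q := Rpower (/2) s) in *.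
 assert (Hq0 : 0 <= q < 1) by (unfold q, s; exact (q_lt1 p Hp)). assert (Hq1 : 0 < 1 - q) by lra.
 assert (Hsum : al <= al / 2 + 3 * Q * rho * Rpower (L / 8) s / (1 - q)).
 { assert (Q * Rpower (L/8) s * rho <= Q * rho * Rpower (L / 8) s / (1 - q)).
   { replace (Q * rho * Rpower (L / 8) s / (1 - q)) with ((Q * Rpower (L/8) s * rho) * / (1 - q)) by (field; lra).
     assert (0 <= Q * Rpower (L / 8) s * rho). { repeat apply Rmult_le_pos; try lra. unfold Q; left; apply Qc_pos. left; apply Rpower_pos. }
     assert (1 <= / (1 - q)). { rewrite <- Rinv_1. apply Rinv_le_contravar; lra. } nra. }
   replace (3 * Q * rho * Rpower (L / 8) s / (1 - q)) with (3 * (Q * rho * Rpower (L / 8) s / (1 - q))) by (field; lra).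
   lra. }
 unfold Cp. fold s q Q. fold L.
 assert (0 <= Q * rho / (1 - q)). { unfold Rdiv; repeat apply Rmult_le_pos; try lra. unfold Q; left; apply Qc_pos. left; apply Rinv_0_lt_compat; lra. }
 replace (6 * Q / (1 - q) * Rpower L s * rho) with (6 * (Q * rho / (1 - q)) * Rpower L s) by (field; lra).
 replace (3 * Q * rho * Rpower (L / 8) s / (1 - q)) with (3 * (Q * rho / (1 - q)) * Rpower (L / 8) s) in Hsum by (field; lra).
 nra. Qed.

Lemma unit_identity X1 Y1 X2 Y2 : X1^2 + Y1^2 = 1 -> X2^2 + Y2^2 = 1 ->
  ((X1 - X2)^2 + (Y1 - Y2)^2) * ((X1 + X2)^2 + (Y1 + Y2)^2) = 4 * (X1 * Y2 - Y1 * X2)^2.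
Proof. intros H1 H2.
 transitivity (((X1^2+Y1^2)+(X2^2+Y2^2))^2 - 4*(X1*X2+Y1*Y2)^2). ring.
 rewrite H1, H2.
 transitivity (4*((X1^2+Y1^2)*(X2^2+Y2^2)) - 4*(X1*X2+Y1*Y2)^2). rewrite H1, H2; ring. ring. Qed.

Lemma sqrt_sq x : 0 <= x -> sqrt x ^ 2 = x.
Proof. intros. simpl. rewrite Rmult_1_r. apply sqrt_sqrt; auto. Qed.

Lemma unit_prod (x1 x2 y1 y2 : R * R) :
  let dx := fst x1 - fst x2 in let dy := snd x1 - snd x2 in
  let ex := fst y1 - fst y2 in let ey := snd y1 - snd y2 in
  0 < dx^2 + dy^2 -> 0 < ex^2 + ey^2 ->
  norm2 (vsub (unit_dir x1 x2) (unit_dir y1 y2)) ^ 2 * norm2 (vadd (unit_dir x1 x2) (unit_dir y1 y2)) ^ 2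
  = 4 * (dx * ey - dy * ex)^2 / ((dx^2 + dy^2) * (ex^2 + ey^2)).
Proof. intros dx dy ex ey Hd He. unfold unit_dir; cbv zeta.
 set (n := norm2 (vsub x1 x2)). set (m := norm2 (vsub y1 y2)).
 assert (Hn : n^2 = dx^2 + dy^2) by (unfold n, norm2, vsub; simpl fst; simpl snd; apply sqrt_sq; lra).
 assert (Hm : m^2 = ex^2 + ey^2) by (unfold m, norm2, vsub; simpl fst; simpl snd; apply sqrt_sq; lra).
 unfold norm2, vsub, vadd. simpl fst; simpl snd.
 rewrite !sqrt_sq by (apply Rplus_le_le_0_compat; apply pow2_ge_0).
 fold dx dy ex ey.
 assert (Hn0 : n <> 0). { intro Z. rewrite Z in Hn. simpl in Hn. lra. }
 assert (Hm0 : m <> 0). { intro Z. rewrite Z in Hm. simpl in Hm. lra. }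
 rewrite unit_identity.
 - rewrite <- Hn, <- Hm. field. auto.
 - replace ((dx / n)^2 + (dy/n)^2) with ((dx^2+dy^2)/n^2) by (field; auto). rewrite Hn. field. lra.
 - replace ((ex / m)^2 + (ey/m)^2) with ((ex^2+ey^2)/m^2) by (field; auto). rewrite Hm. field. lra. Qed.

Lemma cross_rot dx dy ex ey cs sn sg : cs^2 + sn^2 = 1 -> sg * sg = 1 ->
  let D1 := dx * cs + dy * sn in let D2 := sg * (- dx * sn + dy * cs) in
  let E1 := ex * cs + ey * sn in let E2 := sg * (- ex * sn + ey * cs) in
  (dx * ey - dy * ex)^2 = (D1 * E2 - D2 * E1)^2 /\ dx^2 + dy^2 = D1^2 + D2^2.
Proof. intros H1 H2 D1 D2 E1 E2. unfold D1, D2, E1, E2. split.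
 - transitivity ((dx * ey - dy * ex)^2 * (sg*sg) * (cs^2+sn^2)^2). rewrite H1, H2; ring. ring.
 - transitivity ((dx^2+dy^2) * (cs^2+sn^2) + (sg * sg - 1) * (- dx * sn + dy * cs)^2). rewrite H1, H2; ring. ring. Qed.

Lemma angle_bound A B c'' D1 D2 E1 E2 s1 s2 (dx dy ex ey : R) :
  0 < c'' -> c'' < A -> c'' < B -> 0 <= A -> 0 <= B ->
  A^2 * B^2 = 4 * (dx * ey - dy * ex)^2 / ((dx^2 + dy^2) * (ex^2 + ey^2)) ->
  (dx * ey - dy * ex)^2 = (D1 * E2 - D2 * E1)^2 -> dx^2 + dy^2 = D1^2 + D2^2 -> ex^2 + ey^2 = E1^2 + E2^2 ->
  D1 <> 0 -> E1 <> 0 -> D2 = s1 * D1 -> E2 = s2 * E1 ->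
  c'' * c'' / 2 < Rabs (s1 - s2).
Proof. intros Hc HA HB HA0 HB0 HAB Hx Hd He HD1 HE1 HD2 HE2.
 assert (Hlow : c''^4 < A^2 * B^2). { assert (c''^2 < A^2) by nra. assert (c''^2 < B^2) by nra.
   replace (c''^4) with (c''^2 * c''^2) by ring. apply Rmult_le_0_lt_compat; nra. }
 rewrite HAB, Hx, Hd, He, HD2, HE2 in Hlow.
 assert (HD : 0 < D1^2) by nra. assert (HE : 0 < E1^2) by nra.
 replace (4 * (D1 * (s2 * E1) - s1 * D1 * E1) ^ 2 / ((D1 ^ 2 + (s1 * D1) ^ 2) * (E1 ^ 2 + (s2 * E1) ^ 2)))
   with (4 * (s1 - s2)^2 / ((1 + s1^2) * (1 + s2^2))) in Hlow by (field; split; nra).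
 assert (4 * (s1 - s2)^2 / ((1 + s1^2) * (1 + s2^2)) <= 4 * (s1 - s2)^2).
 { assert (1 <= (1 + s1^2) * (1 + s2^2)) by nra.
   unfold Rdiv. assert (0 <= 4 * (s1-s2)^2) by (pose proof (pow2_ge_0 (s1-s2)); lra).
   assert (/ ((1 + s1^2) * (1 + s2^2)) <= 1). { rewrite <- Rinv_1. apply Rinv_le_contravar; lra. } nra. }
 assert (c''^4 < 4 * (s1 - s2)^2) by lra.
 assert (Habs : (s1 - s2)^2 = Rabs (s1 - s2) ^ 2) by (rewrite RPow_abs; symmetry; apply Rabs_right; apply Rle_ge, pow2_ge_0).
 rewrite Habs in H0. pose proof (Rabs_pos (s1 - s2)). nra. Qed.

Lemma cs_id th : cos th ^ 2 + sin th ^ 2 = 1.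
Proof. pose proof (sin2_cos2 th). unfold Rsqr in H. simpl. lra. Qed.

Lemma sg_id (bo : bool) : (if bo then 1 else -1) * (if bo then 1 else -1) = 1.
Proof. destruct bo; ring. Qed.

Lemma coords_D1 a0 th bo P P' : fst (coords a0 th bo P) - fst (coords a0 th bo P') =
  (fst P - fst P') * cos th + (snd P - snd P') * sin th.
Proof. unfold coords; simpl; ring. Qed.

Lemma coords_D2 a0 th bo P P' : snd (coords a0 th bo P) - snd (coords a0 th bo P') =
  (if bo then 1 else -1) * (- (fst P - fst P') * sin th + (snd P - snd P') * cos th).
Proof. unfold coords; simpl; ring. Qed.

Lemma neq_pos (P P' : R * R) : P <> P' -> 0 < (fst P - fst P')^2 + (snd P - snd P')^2.
Proof. intros H. destruct P as [u v], P' as [u' v']; simpl.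
 destruct (Req_dec u u'); destruct (Req_dec v v').
 - subst; exfalso; auto.
 - assert (0 < (v - v')^2) by (simpl; rewrite Rmult_1_r; apply Rsqr_pos_lt; lra). pose proof (pow2_ge_0 (u-u')); lra.
 - assert (0 < (u - u')^2) by (simpl; rewrite Rmult_1_r; apply Rsqr_pos_lt; lra). pose proof (pow2_ge_0 (v-v')); lra.
 - assert (0 < (u - u')^2) by (simpl; rewrite Rmult_1_r; apply Rsqr_pos_lt; lra). pose proof (pow2_ge_0 (v-v')); lra. Qed.

Lemma pair_slope a0 th bo phi dphi P P' :
  (forall x, derivable_pt_lim phi x (dphi x)) ->
  snd (coords a0 th bo P) = phi (fst (coords a0 th bo P)) ->
  snd (coords a0 th bo P') = phi (fst (coords a0 th bo P')) -> P <> P' ->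
  let z := fst (coords a0 th bo P) in let z' := fst (coords a0 th bo P') in
  exists xi, (z < xi < z' \/ z' < xi < z) /\ z - z' <> 0 /\
    snd (coords a0 th bo P) - snd (coords a0 th bo P') = dphi xi * (z - z').
Proof. intros Hd HP HP' Hne z z'.
 assert (Hz : z - z' <> 0).
 { intro Z. assert (E : snd (coords a0 th bo P) - snd (coords a0 th bo P') = 0).
   { rewrite HP, HP'. fold z z'. replace z with z' by lra. ring. }
   pose proof (neq_pos P P' Hne).
   destruct (cross_rot (fst P - fst P') (snd P - snd P') 0 0 (cos th) (sin th) (if bo then 1 else -1) (cs_id th) (sg_id bo)) as [_ H2].
   unfold z, z' in Z. rewrite coords_D1 in Z. rewrite coords_D2 in E. rewrite Z, E in H2. simpl in H2. lra. }
 destruct (Rlt_dec z z') as [Hl|Hl].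
 - destruct (MVT_cor2 phi dphi z z' Hl (fun c _ => Hd c)) as [xi [E Hxi]]. exists xi. split; [left; auto|]. split; auto.
   rewrite HP, HP'. fold z z'. lra.
 - assert (Hl' : z' < z) by lra.
   destruct (MVT_cor2 phi dphi z' z Hl' (fun c _ => Hd c)) as [xi [E Hxi]]. exists xi. split; [right; auto|]. split; auto.
   rewrite HP, HP'. fold z z'. lra. Qed.

Lemma sq_dist a0 th bo q delta P P' : 0 < delta -> in_square q delta P -> in_square q delta P' ->
  - (2 * delta) <= fst (coords a0 th bo P) - fst (coords a0 th bo P') <= 2 * delta.
Proof. intros Hd [[H1 H2] [H3 H4]] [[H5 H6] [H7 H8]]. rewrite coords_D1.
 set (dx := fst P - fst P'). set (dy := snd P - snd P'). pose proof (cs_id th).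
 assert (- delta <= dx <= delta) by (unfold dx; lra). assert (- delta <= dy <= delta) by (unfold dy; lra).
 assert (HC : (dx * cos th + dy * sin th)^2 <= 2 * delta^2).
 { assert ((dx * cos th + dy * sin th)^2 + (dx * sin th - dy * cos th)^2 = dx^2 + dy^2).
   { transitivity ((dx^2+dy^2) * (cos th ^2 + sin th ^2)). ring. rewrite H; ring. }
   pose proof (pow2_ge_0 (dx * sin th - dy * cos th)). nra. }
 set (D := dx * cos th + dy * sin th) in *. split; nra. Qed.

Lemma R1_case p c'' q delta E0 a0 th bo phi dphi r :
  2 < p -> 0 < c'' -> 0 < delta ->
  (forall x, derivable_pt_lim phi x (dphi x)) -> continuity dphi ->
  (forall P, E0Q E0 q delta P -> snd (coords a0 th bo P) = phi (fst (coords a0 th bo P))) ->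
  (exists x1 x2 y1 y2,
     E0Q E0 q delta x1 /\ E0Q E0 q delta x2 /\
     E0Q E0 q delta y1 /\ E0Q E0 q delta y2 /\
     x1 <> x2 /\ y1 <> y2 /\
     Rmin (norm2 (vsub (unit_dir x1 x2) (unit_dir y1 y2)))
          (norm2 (vadd (unit_dir x1 x2) (unit_dir y1 y2))) > c'') ->
  integral2 (besov_integrand p dphi) = Fin r ->
  c'' * c'' / 2 <= Cp p * Rpower (2 * delta) (sig_ p) * rpow r (1 / p).
Proof.
 intros Hp Hc Hdl Hd Hcont Hgr [x1 [x2 [y1 [y2 [Hx1 [Hx2 [Hy1 [Hy2 [Hnx [Hny Hmin]]]]]]]]]] Hint.
 pose proof (integral2_spec _ _ Hint) as Hub.
 set (F := coords a0 th bo).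
 destruct (pair_slope a0 th bo phi dphi x1 x2 Hd (Hgr _ Hx1) (Hgr _ Hx2) Hnx) as [xi1 [Bx [Dx Sx]]].
 destruct (pair_slope a0 th bo phi dphi y1 y2 Hd (Hgr _ Hy1) (Hgr _ Hy2) Hny) as [xi2 [By [Dy Sy]]].
 set (s1 := dphi xi1) in *. set (s2 := dphi xi2) in *.
 assert (Hang : c'' * c'' / 2 < Rabs (s1 - s2)).
 { pose proof (Rmin_l (norm2 (vsub (unit_dir x1 x2) (unit_dir y1 y2))) (norm2 (vadd (unit_dir x1 x2) (unit_dir y1 y2)))).
   pose proof (Rmin_r (norm2 (vsub (unit_dir x1 x2) (unit_dir y1 y2))) (norm2 (vadd (unit_dir x1 x2) (unit_dir y1 y2)))).
   destruct (cross_rot (fst x1 - fst x2) (snd x1 - snd x2) (fst y1 - fst y2) (snd y1 - snd y2) (cos th) (sin th) (if bo then 1 else -1) (cs_id th) (sg_id bo)) as [C1 C2].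
   destruct (cross_rot (fst y1 - fst y2) (snd y1 - snd y2) 0 0 (cos th) (sin th) (if bo then 1 else -1) (cs_id th) (sg_id bo)) as [_ C3].
   apply (angle_bound (norm2 (vsub (unit_dir x1 x2) (unit_dir y1 y2))) (norm2 (vadd (unit_dir x1 x2) (unit_dir y1 y2))) c''
     (fst (coords a0 th bo x1) - fst (coords a0 th bo x2)) (snd (coords a0 th bo x1) - snd (coords a0 th bo x2))
     (fst (coords a0 th bo y1) - fst (coords a0 th bo y2)) (snd (coords a0 th bo y1) - snd (coords a0 th bo y2))
     s1 s2 (fst x1 - fst x2) (snd x1 - snd x2) (fst y1 - fst y2) (snd y1 - snd y2)); auto.
   - lra. - lra. - unfold norm2; apply sqrt_pos. - unfold norm2; apply sqrt_pos.
   - apply unit_prod; apply neq_pos; auto.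
   - rewrite !coords_D1, !coords_D2. exact C1.
   - rewrite !coords_D1, !coords_D2. exact C2.
   - rewrite !coords_D1, !coords_D2. exact C3. }
 assert (Hkp : 0 < c'' * c'' / 2) by nra.
 assert (Hne : xi1 <> xi2). { intro E. unfold s1, s2 in Hang. rewrite E in Hang. unfold Rminus in Hang. rewrite Rplus_opp_r, Rabs_R0 in Hang. lra. }
 destruct Hx1 as [_ Qx1]. destruct Hx2 as [_ Qx2]. destruct Hy1 as [_ Qy1]. destruct Hy2 as [_ Qy2].
 pose proof (sq_dist a0 th bo q delta x1 y1 Hdl Qx1 Qy1). pose proof (sq_dist a0 th bo q delta x1 y2 Hdl Qx1 Qy2).
 pose proof (sq_dist a0 th bo q delta x2 y1 Hdl Qx2 Qy1). pose proof (sq_dist a0 th bo q delta x2 y2 Hdl Qx2 Qy2).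
 assert (Hdist : Rabs (xi1 - xi2) <= 2 * delta).
 { unfold Rabs. destruct Rcase_abs; destruct Bx as [Bx|Bx]; destruct By as [By|By]; lra. }
 assert (Hr0 : 0 <= r). { apply Hub. exists 1, O, (fun _ _ => 0). repeat split; try lra. intros; lia. }
 set (a := Rmin xi1 xi2). set (b := Rmax xi1 xi2).
 assert (Hab : a < b). { unfold a, b, Rmin, Rmax. destruct Rle_dec; lra. }
 assert (Hgab : Rabs (s1 - s2) = Rabs (dphi b - dphi a)).
 { unfold a, b, Rmin, Rmax, s1, s2. destruct Rle_dec. rewrite Rabs_minus_sym; auto. auto. }
 assert (HL : Rpower (b - a) (sig_ p) <= Rpower (2 * delta) (sig_ p)).
 { apply Rle_Rpower_l. left; apply sig_pos; auto. split. lra.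
   assert (Eba : b - a = Rabs (xi1 - xi2)) by (unfold a, b, Rmin, Rmax; destruct Rle_dec; unfold Rabs; destruct Rcase_abs; lra).
   lra. }
 pose proof (Cp_pos p Hp). pose proof (Rpower_pos (b - a) (sig_ p)).
 destruct (Rlt_dec 0 r) as [Hrp|Hrp].
 - set (rho := Rpower r (1/p)).
   assert (Hrho : 0 < rho) by apply Rpower_pos.
   assert (Hrr : r <= Rpower rho p). { unfold rho. rewrite Rpower_mult. replace (1/p*p) with 1 by (field; lra). rewrite Rpower_1; lra. }
   pose proof (core p dphi a b r rho Hp Hcont Hab Hrho Hrr Hub) as Hco.
   unfold rpow. destruct (Rlt_dec 0 r); [|lra]. fold rho.
   rewrite <- Hgab in Hco.
   assert (Cp p * Rpower (b - a) (sig_ p) * rho <= Cp p * Rpower (2 * delta) (sig_ p) * rho).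
   { apply Rmult_le_compat_r; [lra|]. apply Rmult_le_compat_l; lra. }
   lra.
 - exfalso. assert (r = 0) by lra.
   set (rho := c'' * c'' / 2 / (2 * (Cp p * Rpower (b - a) (sig_ p)))).
   assert (Hrho : 0 < rho). { unfold rho. apply Rdiv_lt_0_compat; auto. nra. }
   assert (Hrr : r <= Rpower rho p) by (pose proof (Rpower_pos rho p); lra).
   pose proof (core p dphi a b r rho Hp Hcont Hab Hrho Hrr Hub) as Hco.
   rewrite <- Hgab in Hco.
   assert (Cp p * Rpower (b - a) (sig_ p) * rho = c'' * c'' / 4) by (unfold rho; field; split; lra).
   lra. Qed.

Theorem mainTheorem8 :
  forall p c c'' : R, 2 < p -> 0 < c -> 0 < c'' ->
  exists C : R, 0 < C /\
    forall (c' : R) (E0 : list (R * R)) (q : R * R) (delta : R),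
      0 < c' -> 0 < delta ->
      rough p c c' c'' E0 q delta ->
      ER_le (Fin (/ C * Rpower delta (2 / p - 1)))
            (besov_set_norm p (E0Q E0 q delta)).
Proof.
 intros p c c'' Hp Hc Hc''.
 pose proof (Cp_pos p Hp) as HCp. pose proof (Rpower_pos 2 (sig_ p)) as HT.
 set (K0 := Cp p * Rpower 2 (sig_ p)).
 assert (HK0 : 0 < K0) by (unfold K0; nra).
 set (kap := c'' * c'' / 2). assert (Hkap : 0 < kap) by (unfold kap; nra).
 exists (/ c + K0 / kap).
 assert (H1 : 0 < / c) by (apply Rinv_0_lt_compat; auto).
 assert (H2 : 0 < K0 / kap) by (apply Rdiv_lt_0_compat; auto).
 split. lra.
 assert (Hic : / (/ c + K0 / kap) <= c).
 { rewrite <- (Rinv_inv c) at 2. apply Rinv_le_contravar; lra. }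
 assert (Hik : / (/ c + K0 / kap) <= kap / K0).
 { replace (kap / K0) with (/ (K0 / kap)) by (field; lra). apply Rinv_le_contravar; lra. }
 set (iC := / (/ c + K0 / kap)) in *.
 assert (HiC : 0 < iC) by (unfold iC; apply Rinv_0_lt_compat; lra).
 intros c' E0 q delta Hc' Hd Hrough.
 assert (Hpw : 0 < Rpower delta (2 / p - 1)) by apply Rpower_pos.
 destruct Hrough as [R1|[R2a R2b]].
 - unfold besov_set_norm. apply ER_inf_lb.
   + intros r [a0 [th [bo [phi [dphi [_ [_ [_ Hv]]]]]]]]. unfold besov_fn_norm in Hv.
     destruct (integral2 (besov_integrand p dphi)); inversion Hv. apply rpow_nonneg.
   + intros w [a0 [th [bo [phi [dphi [Hder [Hcont [Hgr Hv]]]]]]]]. subst w. unfold besov_fn_norm.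
     destruct (integral2 (besov_integrand p dphi)) as [r|] eqn:Hint; simpl; auto.
     pose proof (R1_case p c'' q delta E0 a0 th bo phi dphi r Hp Hc'' Hd Hder Hcont Hgr R1 Hint) as HR.
     fold kap in HR.
     assert (E2 : Rpower (2 * delta) (sig_ p) = Rpower 2 (sig_ p) * Rpower delta (sig_ p)) by (rewrite Rpower_mult_distr; lra).
     rewrite E2 in HR.
     assert (E3 : Rpower delta (2 / p - 1) = / Rpower delta (sig_ p)).
     { rewrite <- Rpower_Ropp. f_equal. unfold sig_. ring. }
     rewrite E3. pose proof (Rpower_pos delta (sig_ p)) as HX.
     set (X := Rpower delta (sig_ p)) in *. set (rho := rpow r (1 / p)) in *.
     replace (Cp p * (Rpower 2 (sig_ p) * X) * rho) with (K0 * X * rho) in HR by (unfold K0; ring).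
     apply Rle_trans with (kap / K0 * / X).
     { apply Rmult_le_compat_r; auto. left; apply Rinv_0_lt_compat; auto. }
     apply Rmult_le_reg_r with (K0 * X). nra.
     replace (kap / K0 * / X * (K0 * X)) with kap by (field; lra). lra.
 - destruct (besov_set_norm p (E0Q E0 q delta)) as [n|]; simpl in *; auto.
   assert (iC * Rpower delta (2 / p - 1) <= c * Rpower delta (2 / p - 1)) by (apply Rmult_le_compat_r; lra).
   lra.
Qed.
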